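(* Let $G=(V,E)$ be a complete hypergraph with $n:=|V|$, let $J\subseteq V$, and let $j\notin V$. Then: (i) replacing, in the expression $\ell_n(J,V\setminus J)$, each variable $z_p$ ($p\in\{\emptyset\}\cup V\cup E$, where $p\in V$ means the singleton $\{p\}$) by $z_{p\cup\{j\}}$ yields exactly $\ell_{n+1}(J\cup\{j\},V\setminus J)$; (ii) replacing each such $z_p$ by $z_p-z_{p\cup\{j\}}$ yields exactly $\ell_{n+1}(J,(V\cup\{j\})\setminus J)$. Consequently the inequality $\ell_n(J,V\setminus J)\ge0$ becomes $\ell_{n+1}(J\cup\{j\},V\setminus J)\ge0$ under (i), and $\ell_{n+1}(J,(V\cup\{j\})\setminus J)\ge0$ under (ii).
   Context: A hypergraph $G=(V,E)$ is complete if $E$ consists of all subsets of $V$ of cardinality at least two. Variables are indexed by subsets $S$ of $V\cup\{j\}$: $z_\emptyset:=1$, $z_{\{k\}}=z_k$, and $z_S$ for $|S|\ge2$. For disjoint $J_1,J_2$ with $|J_1\cup J_2|=d$, $\ell_d(J_1,J_2):=\sum_{t\subseteq J_2}(-1)^{|t|}z_{J_1\cup t}$. *)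

(* Defs.v *)
From mathcomp Require Import all_boot all_order all_algebra.
Set Implicit Arguments. Unset Strict Implicit. Unset Printing Implicit Defensive.
Import Order.TTheory GRing.Theory Num.Theory.
Local Open Scope ring_scope.

(* Variables z_S are indexed by finite subsets S of a ground finType U;
   a linear expression in the z's is represented by its value on an
   arbitrary assignment z : {set U} -> R (z set0 plays the role of z_emptyset,
   treated as a formal symbol so that substitutions may act on it).
   ell J1 J2 z = \sum_{t \subseteq J2} (-1)^{|t|} z_{J1 \cup t}.
   The subscript d = |J1 \cup J2| of the paper is determined by J1, J2. *)
Definition ell (R : ringType) (U : finType) (J1 J2 : {set U}) (z : {set U} -> R) : R :=
  \sum_(t in powerset J2) (-1) ^+ #|t| * z (J1 :|: t).

Definition subst1 (R : ringType) (U : finType) (j : U) (z : {set U} -> R) : {set U} -> R :=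
  fun p => z (p :|: [set j]).

Definition subst2 (R : ringType) (U : finType) (j : U) (z : {set U} -> R) : {set U} -> R :=
  fun p => z p - z (p :|: [set j]).

(* Main.v *)
Require Import Defs.
From mathcomp Require Import all_boot all_order all_algebra.
Import Order.TTheory GRing.Theory Num.Theory.
Local Open Scope ring_scope.

Lemma part2 (R : ringType) (U : finType) (W J : {set U}) (j : U) (z : {set U} -> R) :
  j \notin W -> j \notin J ->
  ell J W (subst2 j z) = ell J (j |: W) z.
Proof.
move=> jW jJ; rewrite /ell /subst2.
rewrite [RHS](bigID (fun t : {set U} => j \in t)) /= addrC.
have -> : \sum_(i in powerset (j |: W) | j \notin i) (-1) ^+ #|i| * z (J :|: i)
   = \sum_(t in powerset W) (-1) ^+ #|t| * z (J :|: t).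
  apply: eq_bigl => t; rewrite !powersetE.
  apply/andP/idP => [[tS jt]|tW]; last first.
    split; first by rewrite (subset_trans tW) // subsetUr.
    by apply: contra jW; move/(subsetP tW).
  apply/subsetP => x xt; have := subsetP tS x xt; rewrite in_setU1.
  by case/orP => // /eqP ex; rewrite -ex xt in jt.
rewrite [X in _ = _ + X](reindex_onto (fun t => j |: t) (fun t => t :\ j)) /=; last first.
  by move=> t /andP[_ jt]; rewrite setD1K.
rewrite (eq_bigr (fun t : {set U} => (-1) ^+ #|t| * z (J :|: t) - (-1) ^+ #|t| * z (J :|: t :|: [set j]))); last by move=> t _; rewrite mulrBr.
rewrite sumrB; congr (_ + _).
rewrite -sumrN; apply: eq_big => t.
  rewrite !powersetE setU11 andbT; apply/idP/andP => [tW|[tS /eqP e]].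
    have jt : j \notin t by apply: contra jW; move/(subsetP tW).
    by rewrite setU1K // eqxx setUS.
  have jt : j \notin t by rewrite -e setD11.
  apply/subsetP => x xt; have := subsetP tS x (setU1r j xt); rewrite in_setU1.
  by case/orP => // /eqP ex; rewrite -ex xt in jt.
rewrite powersetE => tW.
have jt : j \notin t by apply: contra jW; move/(subsetP tW).
rewrite cardsU1 jt exprS mulN1r mulNr; congr (- (_ * z _)).
by rewrite [in RHS]setUA setUAC.
Qed.
Theorem lemma5 (R : realDomainType) (U : finType) (V J : {set U}) (j : U) :
  J \subset V -> j \notin V ->
  [/\ (forall z : {set U} -> R,
         ell J (V :\: J) (subst1 j z) = ell (J :|: [set j]) (V :\: J) z),
      (forall z : {set U} -> R,
         ell J (V :\: J) (subst2 j z) = ell J ((V :|: [set j]) :\: J) z),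
      (forall z : {set U} -> R,
         (0 <= ell J (V :\: J) (subst1 j z)) = (0 <= ell (J :|: [set j]) (V :\: J) z))
    & (forall z : {set U} -> R,
         (0 <= ell J (V :\: J) (subst2 j z)) = (0 <= ell J ((V :|: [set j]) :\: J) z))].
Proof.
move=> JV jV.
have h1 : forall z : {set U} -> R,
    ell J (V :\: J) (subst1 j z) = ell (J :|: [set j]) (V :\: J) z.
  move=> z; rewrite /ell /subst1; apply: eq_bigr => t _.
  by rewrite setUAC.
have jJ : j \notin J by apply: contra jV; move/(subsetP JV).
have h2 : forall z : {set U} -> R,
    ell J (V :\: J) (subst2 j z) = ell J ((V :|: [set j]) :\: J) z.
  move=> z; have -> : (V :|: [set j]) :\: J = j |: (V :\: J).
    by rewrite setDUl setUC (setDidPl _) // disjoints1.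
  by apply: part2 => //; rewrite in_setD negb_and jV orbT.
by split => // z; rewrite ?h1 ?h2.
Qed.
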